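(* Let $\mathbb{E}$ be a finite-dimensional real inner product space and let $f_i:\mathbb{E}\to(-\infty,\infty]$, $i=1,\ldots,M$, be convex, directionally differentiable, continuous on their domains, with $\mathrm{dom} f_i$ closed. Suppose $F(x):=\min_{i\in[M]}f_i(x)$ is continuous on $\mathrm{dom} F$. Then for every $x\in\mathrm{dom} F$ there exists a neighborhood $\mathcal{N}$ of $x$ such that for all $y\in\mathcal{N}\cap\mathrm{dom} F$ we have $y-x\in\mathcal{F}(x;\mathrm{dom} F)$ and $$F(y)\ge F(x)+F'(x;y-x).$$
   Context: $[M]=\{1,\ldots,M\}$; $\mathrm{dom}\, g=\{x\mid g(x)<\infty\}$. For $\mathcal{C}\subset\mathbb{E}$, $x\in\mathbb{E}$: $\mathcal{F}(x;\mathcal{C})=\{d\mid \exists\varsigma'>0:\ x+\varsigma d\in\mathcal{C}\ \forall\varsigma\in(0,\varsigma')\}$ if $x\in\mathcal{C}$, and $\emptyset$ otherwise. $g$ is directionally differentiable if for every $x\in\mathrm{dom}\, g$, $d\in\mathcal{F}(x;\mathrm{dom}\, g)$ the limit $g'(x;d)=\lim_{\varsigma\searrow0}(g(x+\varsigma d)-g(x))/\varsigma$ exists in $\mathbb{R}$. *)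

(* Defs.v *)
From HB Require Import structures.
From mathcomp Require Import all_boot all_order all_algebra.
From mathcomp Require Import all_classical all_reals all_analysis.
Set Implicit Arguments. Unset Strict Implicit. Unset Printing Implicit Defensive.
Import Order.TTheory GRing.Theory Num.Theory.
Import numFieldNormedType.Exports.
Local Open Scope classical_set_scope.
Local Open Scope ring_scope.

Section Defs.
Variables (R : realType) (n : nat).
Notation E := 'rV[R]_n.

Definition edom (g : E -> \bar R) : set E := [set x | (g x < +oo)%E].

Definition feas_dir (C : set E) (x : E) : set E :=
  [set d | C x /\ exists2 s' : R, 0 < s' & forall s : R, 0 < s < s' -> C (x + s *: d)].

Definition econvex (g : E -> \bar R) : Prop :=
  forall (x y : E) (t : R), 0 <= t <= 1 ->
    (g ((1 - t) *: x + t *: y)%R <= (1 - t)%:E * g x + t%:E * g y)%E.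

Definition has_dir_deriv (g : E -> \bar R) (x d : E) (l : R) : Prop :=
  (fun s : R => (fine (g (x + s *: d)) - fine (g x)) / s) @ 0^'+ --> l.

Definition dir_differentiable (g : E -> \bar R) : Prop :=
  forall x d, edom g x -> feas_dir (edom g) x d -> exists l : R, has_dir_deriv g x d l.

Definition emin_fam (M : nat) (f : 'I_M -> E -> \bar R) (x : E) : \bar R :=
  \big[Order.min/+oo%E]_(i < M) f i x.

End Defs.

(* Main.v *)
Set Warnings "-all".
Require Import Defs.
From HB Require Import structures.
From mathcomp Require Import all_boot all_order all_algebra.
From mathcomp Require Import all_classical all_reals all_analysis.
From mathcomp Require Import lra.
Import Order.TTheory GRing.Theory Num.Theory.
Import numFieldNormedType.Exports.
Local Open Scope classical_set_scope.
Local Open Scope ring_scope.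
Lemma bigmin_cases d (T : orderType d) (I : finType) (P : pred I) (x : T) (F : I -> T) :
  \big[Order.min/x]_(i | P i) F i = x \/ exists2 i, P i & \big[Order.min/x]_(i | P i) F i = F i.
Proof.
apply: (big_ind (fun v => v = x \/ exists2 i, P i & v = F i)).
- by left.
- move=> a b ha hb; case: (leP a b) => _; [exact: ha | exact: hb].
- by move=> i Pi; right; exists i.
Qed.

Lemma cvg_min2 (R : realType) (T : Type) (F : set_system T) (FF : Filter F)
  (g h : T -> R) a b : g @ F --> a -> h @ F --> b ->
  (fun s => Order.min (g s) (h s)) @ F --> Order.min a b.
Proof.
move=> ga hb; apply: (@continuous2_cvg _ R R R F FF g h (fun u v => Order.min u v) a b) => //.
exact: (@min_continuous _ R (a, b)).
Qed.

Lemma cvg_bigmin (R : realType) (T : Type) (F : set_system T) (FF : Filter F)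
  (I : finType) (P : pred I) (q : I -> T -> R) (l : I -> R) (j : I) :
  q j @ F --> l j -> (forall i, P i -> q i @ F --> l i) ->
  (fun s => \big[Order.min/q j s]_(i | P i) q i s) @ F --> \big[Order.min/l j]_(i | P i) l i.
Proof.
move=> hj hi; rewrite /index_enum; elim: (Finite.enum I) => [|a r IH].
  have -> : (fun s => \big[Order.min/q j s]_(i <- [::] | P i) q i s) = q j.
    by apply: funext => s; rewrite big_nil.
  by rewrite big_nil.
have -> : (fun s => \big[Order.min/q j s]_(i <- a :: r | P i) q i s) =
  (fun s => if P a then Order.min (q a s) (\big[Order.min/q j s]_(i <- r | P i) q i s)
            else \big[Order.min/q j s]_(i <- r | P i) q i s).
  by apply: funext => s; rewrite big_cons.
rewrite big_cons; case: ifP => Pa //.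
exact: cvg_min2 (hi _ Pa) IH.
Qed.

Lemma min_shift (R : realType) (a b c s : R) : 0 < s ->
  (Order.min a b - c) / s = Order.min ((a - c) / s) ((b - c) / s).
Proof.
move=> s0; case: (leP a b) => ab.
  by rewrite min_l // ler_pM2r ?invr_gt0 // lerD2r.
by rewrite min_r // ltW // ltr_pM2r ?invr_gt0 // ltrD2r.
Qed.

Lemma bigmin_shift (R : realType) (I : finType) (P : pred I) (a : I -> R) a0 c s : 0 < s ->
  (\big[Order.min/a0]_(i | P i) a i - c) / s = \big[Order.min/(a0 - c) / s]_(i | P i) ((a i - c) / s).
Proof.
move=> s0; apply: (big_ind2 (fun u v => (u - c) / s = v)) => //.
by move=> x1 x2 y1 y2 <- <-; rewrite min_shift.
Qed.

Lemma bigmin_fine (R : realType) (I : finType) (P : pred I) (a : I -> \bar R) (a0 : \bar R) :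
  a0 \is a fin_num -> (forall i, P i -> a i \is a fin_num) ->
  \big[Order.min/a0]_(i | P i) a i = (\big[Order.min/fine a0]_(i | P i) fine (a i))%:E.
Proof.
move=> h0 hi; apply: (big_ind2 (fun u v => u = v%:E)).
- by rewrite fineK.
- by move=> x1 x2 y1 y2 -> ->; rewrite EFin_min.
- by move=> i Pi; rewrite fineK // hi.
Qed.

Lemma vec_comb (R : realType) (n : nat) (x w : 'rV[R]_n) (r : R) :
  (1 - r) *: x + r *: (x + w) = x + r *: w.
Proof. by rewrite scalerBl scale1r scalerDr addrA subrK. Qed.

Lemma vec_comb2 (R : realType) (n : nat) (x y : 'rV[R]_n) (s : R) :
  x + s *: (y - x) = (1 - s) *: x + s *: y.
Proof. by rewrite -{2}(subrKC x y) vec_comb. Qed.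

Lemma dom_convex (R : realType) (n : nat) (g : 'rV[R]_n -> \bar R) u v t :
  (forall z, g z != -oo%E) -> econvex g -> edom g u -> edom g v -> 0 <= t <= 1 ->
  edom g ((1 - t) *: u + t *: v).
Proof.
move=> ninf cg du dv t01; rewrite /edom /=.
apply: (le_lt_trans (cg u v t t01)).
have fu : g u \is a fin_num by rewrite fin_numE ninf /= lt_eqF.
have fv : g v \is a fin_num by rewrite fin_numE ninf /= lt_eqF.
by rewrite -(fineK fu) -(fineK fv) -!EFinM -EFinD ltry.
Qed.
Lemma lt_fine_E (R : realType) (u v : \bar R) :
  u \is a fin_num -> v != -oo%E -> fine u < fine v -> (u < v)%E.
Proof.
move=> fu; case: v => [r| |] //= _ h; last by rewrite -(fineK fu) ltry.
by rewrite -(fineK fu) lte_fin.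
Qed.

Lemma lt_fine_E2 (R : realType) (u v : \bar R) :
  v \is a fin_num -> u != -oo%E -> (u < +oo)%E -> fine u < fine v -> (u < v)%E.
Proof.
move=> fv; case: u => [r| |] //= _ _ h.
by rewrite -(fineK fv) lte_fin.
Qed.

Theorem mainTheorem2 (R : realType) (n M : nat) (f : 'I_M -> 'rV[R]_n -> \bar R) :
  (forall i x, f i x != -oo%E) ->
  (forall i, econvex (f i)) ->
  (forall i, dir_differentiable (f i)) ->
  (forall i, {within edom (f i), continuous (f i)}) ->
  (forall i, closed (edom (f i))) ->
  {within edom (emin_fam f), continuous (emin_fam f)} ->
  forall x, edom (emin_fam f) x ->
  exists2 N : set 'rV[R]_n, nbhs x N &
    forall y, N y -> edom (emin_fam f) y ->
      feas_dir (edom (emin_fam f)) x (y - x) /\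
      exists l : R, has_dir_deriv (emin_fam f) x (y - x) l /\
        (emin_fam f y >= emin_fam f x + l%:E)%E.
Proof.
move=> ninf cvx ddf contf cldf contF x hx.
set F := emin_fam f.
have Fle : forall i z, (F z <= f i z)%E by move=> i z; exact: bigmin_le.
have Fcase : forall z, F z = +oo%E \/ exists2 i, true & F z = f i z.
  by move=> z; exact: (@bigmin_cases _ _ _ (fun _ : 'I_M => true) (+oo)%E (fun i => f i z)).
have Fninf : forall z, F z != -oo%E.
  by move=> z; case: (Fcase z) => [->|[i _ ->]].
have domFi : forall i z, edom (f i) z -> edom F z.
  by move=> i z; rewrite /edom /=; apply: le_lt_trans.
have finE : forall (u : \bar R), u != -oo%E -> (u < +oo)%E -> u \is a fin_num.
  by move=> u h1 h2; rewrite fin_numE h1 /= lt_eqF.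
have finFx : F x \is a fin_num by exact: finE.
set P := fun i z => edom (f i) z -> edom (f i) x /\ (f i x = F x \/ (F z < f i z)%E).
have HN : \forall z \near x, forall i, P i z.
  apply: (@filter_forall _ 'I_M P (nbhs x) _) => i.
  case: (pselect (edom (f i) x)) => hxi; last first.
    have hn : nbhs x (~` edom (f i)).
      by apply: open_nbhs_nbhs; split => //; exact: closed_openC.
    by apply: filterS hn => z hz hz'.
  case: (eqVneq (f i x) (F x)) => e.
    by apply: nearW => z _; split => //; left.
  have finfix : f i x \is a fin_num by exact: finE.
  have ltx : (F x < f i x)%E by rewrite lt_neqAle eq_sym e Fle.
  set a := fine (f i x); set c := fine (F x).
  have ca : c < a by rewrite -lte_fin /a /c !fineK.
  have hfi : f i z @[z --> within (edom (f i)) (nbhs x)] --> f i x := (subspace_continuousP _ _).1 (contf i) x hxi.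
  rewrite -(fineK finfix) in hfi.
  have hfi' : fine (f i z) @[z --> within (edom (f i)) (nbhs x)] --> a.
    by apply: (fine_cvg hfi); typeclasses eauto.
  have hF : F z @[z --> within (edom F) (nbhs x)] --> F x := (subspace_continuousP _ _).1 contF x hx.
  rewrite -(fineK finFx) in hF.
  have hF' : fine (F z) @[z --> within (edom F) (nbhs x)] --> c.
    by apply: (fine_cvg hF); typeclasses eauto.
  have g1 := cvgr_gt a hfi' (c + (a - c) / 2) ltac:(lra).
  have g2 := cvgr_lt c hF' (c + (a - c) / 2) ltac:(lra).
  have {}g1 : \forall t \near x, edom (f i) t -> c + (a - c) / 2 < fine (f i t) := g1.
  have {}g2 : \forall t \near x, edom F t -> fine (F t) < c + (a - c) / 2 := g2.
  apply: filterS (filterI g1 g2) => z [h1 h2] hz; split => //; right.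
  have hzF := domFi _ _ hz.
  apply: lt_fine_E; first exact: finE.
    exact: ninf.
  by have := h1 hz; have := h2 hzF; rewrite /=; lra.
exists [set z | forall i, P i z] => //.
move=> y hyN hyF.
set d := y - x.
have [j Fyj] : exists j, F y = f j y.
  by case: (Fcase y) => [e|[k _ e]]; [move: hyF; rewrite /edom /= e ltxx | exists k].
have hjy : edom (f j) y by rewrite /edom /= -Fyj.
have [hjx jact] : edom (f j) x /\ f j x = F x.
  have [h1 [h2|h2]] := hyN j hjy; first by [].
  by move: h2; rewrite Fyj ltxx.
have finjx : f j x \is a fin_num by exact: finE.
have finjy : f j y \is a fin_num by exact: finE.
set a := fine (f j x); set b := fine (f j y).
have cvbound : forall s, 0 <= s <= 1 -> (f j (x + s *: d)%R <= ((1 - s) * a + s * b)%:E)%E.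
  move=> s s01; rewrite /d vec_comb2.
  apply: (le_trans (cvx j x y s s01)).
  by rewrite -[f j x](fineK finjx) -[f j y](fineK finjy) -!EFinM -EFinD.
have domj : forall s, 0 <= s <= 1 -> edom (f j) (x + s *: d).
  by move=> s s01; rewrite /edom /=; apply: (le_lt_trans (cvbound s s01)); exact: ltry.
split.
  split => //; exists 1 => // s /andP[s0 s1].
  apply: (domFi j); apply: domj; rewrite (ltW s0) ltW //.
set A := fun i => (f i x == F x) && `[< feas_dir (edom (f i)) x d >].
have Aj : A j.
  rewrite /A jact eqxx /=; apply/asboolP; split => //; exists 1 => // s /andP[s0 s1].
  by apply: domj; rewrite (ltW s0) ltW.
have : forall i, exists l, A i -> has_dir_deriv (f i) x d l.
  move=> i; case: (boolP (A i)) => Ai; last by exists 0.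
  move: (Ai) => /andP[_ /asboolP hfe].
  have [l hl] := ddf i x d hfe.1 hfe.
  by exists l.
case/choice => lf Hlf.
set l := \big[Order.min/lf j]_(i | A i) lf i.
exists l; split; last first.
  have lj : l <= lf j by exact: bigmin_le_id.
  have hq := Hlf j Aj.
  have lfj : lf j <= b - a.
    rewrite -(cvg_lim _ hq) //; apply: limr_le; first by apply/cvg_ex; exists (lf j).
    near=> s.
    have s0 : 0 < s by near: s; exact: nbhs_right_gt.
    have s1 : s < 1 by near: s; exact: nbhs_right_lt.
    have s01 : 0 <= s <= 1 by rewrite (ltW s0) ltW.
    have hb := cvbound s s01.
    have finz : f j (x + s *: d) \is a fin_num.
      by apply: finE => //; apply: domj.
    rewrite -(fineK finz) lee_fin in hb.
    rewrite /= ler_pdivrMr //. rewrite -/a. nra.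
  rewrite Fyj -jact -(fineK finjx) -(fineK finjy) -EFinD lee_fin -/a -/b.
  lra.
rewrite /has_dir_deriv.
set q := fun i s => (fine (f i (x + s *: d)) - fine (f i x)) / s.
have Hg : (fun s => \big[Order.min/q j s]_(i | A i) q i s) @ 0^'+ --> l.
  by apply: cvg_bigmin => //; exact: Hlf.
apply: (cvg_trans _ Hg); apply: near_eq_cvg.
have Hseg : (fun s : R => x + s *: d) @ 0^'+ --> x.
  have h0 : (fun s : R => x + s *: d) @ 0 --> x + 0 *: d.
    by apply: cvgD; [exact: cvg_cst | apply: cvgZl; exact: cvg_id].
  rewrite scale0r addr0 in h0; exact: cvg_at_right_filter h0.
have HNs : \forall s \near 0^'+, forall i, P i (x + s *: d) := Hseg _ HN.
have Hdom : \forall s \near 0^'+, forall i, A i -> edom (f i) (x + s *: d).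
  apply: filter_forall => i.
  case: (boolP (A i)) => Ai; last by apply: nearW.
  move: (Ai) => /andP[_ /asboolP [_ [s' s'0 hs']]].
  near=> s => _; apply: hs'; apply/andP; split.
    by near: s; exact: nbhs_right_gt.
  by near: s; exact: nbhs_right_lt.
near=> s.
have s0 : 0 < s by near: s; exact: nbhs_right_gt.
have hN : forall i, P i (x + s *: d) by near: s; exact: HNs.
have hD : forall i, A i -> edom (f i) (x + s *: d) by near: s; exact: Hdom.
set z := x + s *: d.
have finz : forall i, A i -> f i z \is a fin_num by move=> i Ai; apply: finE => //; exact: hD.
have Fz : F z = \big[Order.min/f j z]_(i | A i) f i z.
  apply/eqP; rewrite eq_le; apply/andP; split.
    by apply: le_bigmin => // i _; exact: Fle.
  have hzF : edom F z by apply: (domFi j); exact: hD.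
  have [k Fzk] : exists k, F z = f k z.
    by case: (Fcase z) => [e|[k _ e]]; [move: hzF; rewrite /edom /= e ltxx | exists k].
  have hkz : edom (f k) z by rewrite /edom /= -Fzk.
  have [hkx kact] : edom (f k) x /\ f k x = F x.
    have [h1 [h2|h2]] := hN k hkz; first by [].
    by move: h2; rewrite Fzk ltxx.
  have Ak : A k.
    rewrite /A kact eqxx /=; apply/asboolP; split => //; exists s => // t /andP[t0 ts].
    have -> : x + t *: d = (1 - t / s) *: x + (t / s) *: z.
      by rewrite /z vec_comb scalerA divfK // gt_eqF.
    apply: dom_convex => //.
    by rewrite divr_ge0 ?(ltW t0) ?(ltW s0) //= ler_pdivrMr // mul1r ltW.
  by rewrite Fzk; exact: bigmin_le_cond.
rewrite Fz bigmin_fine; [|exact: finz|exact: finz].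
rewrite /= bigmin_shift //.
rewrite /q -jact; apply: eq_bigr => i /andP[/eqP -> _]; by rewrite jact.
Unshelve. all: end_near.
Qed.
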